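(* Let $X$ be a proper geodesic metric space with base point $o$. Let $\delta>\epsilon>0$, $C>0$, and $(q_1,Q_1),(q_2,Q_2)\in[1,\infty)\times[0,\infty)$. Then there is a constant $M=M(\delta,\epsilon,q_1,Q_1,q_2,Q_2,C)$ such that the following holds. Let $r>1$ and let $\alpha$ be a $(q_1,Q_1)$-quasi-geodesic segment starting at $o$, lying entirely in the closed ball $B_{\epsilon r}=\bar B(o,\epsilon r)$, whose terminal point $\alpha_+$ lies on the sphere $S(o,\epsilon r)$. Let $\zeta$ be a geodesic ray starting at $o$ and passing through $\alpha_+$, and let $p$ be the point of $\zeta$ on the sphere $S(o,\delta r)$. Let $\gamma$ be a $(q_2,Q_2)$-quasi-geodesic starting at $p$ which lies entirely outside the open ball $B^o(o,\delta r)$ and has length $\ell(\gamma)\le Cr$. Then the concatenation $\sigma=\alpha\cup[\alpha_+,p]\cup\gamma$, where $[\alpha_+,p]$ is the subsegment of $\zeta$, is an $(M,M)$-quasi-geodesic.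
   Context: A $(q,Q)$-quasi-geodesic in a metric space $X$ is a map $\alpha\colon I\to X$, $I\subset\mathbb R$ an interval, with $\frac{|s-t|}{q}-Q\le d(\alpha(s),\alpha(t))\le q|s-t|+Q$ for all $s,t\in I$; quasi-geodesics may be assumed continuous (Lipschitz), and concatenations are parametrized accordingly. *)

(* Defs.v *)
From Stdlib Require Import Reals Lra List.
Open Scope R_scope.

Definition is_metric {X : Type} (d : X -> X -> R) : Prop :=
  (forall x y, d x y = 0 <-> x = y) /\
  (forall x y, d x y = d y x) /\
  (forall x y z, d x z <= d x y + d y z).

Definition is_open {X : Type} (d : X -> X -> R) (U : X -> Prop) : Prop :=
  forall x, U x -> exists e, 0 < e /\ forall y, d x y < e -> U y.

Definition compact_set {X : Type} (d : X -> X -> R) (K : X -> Prop) : Prop :=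
  forall (I : Type) (U : I -> X -> Prop),
    (forall i, is_open d (U i)) ->
    (forall x, K x -> exists i, U i x) ->
    exists l : list I, forall x, K x -> exists i, In i l /\ U i x.

Definition proper_space {X : Type} (d : X -> X -> R) : Prop :=
  forall x rad, compact_set d (fun y => d x y <= rad).

Definition geodesic_space {X : Type} (d : X -> X -> R) : Prop :=
  forall x y, exists g : R -> X, g 0 = x /\ g (d x y) = y /\
    forall s t, 0 <= s <= d x y -> 0 <= t <= d x y -> d (g s) (g t) = Rabs (s - t).

Definition geodesic_ray {X : Type} (d : X -> X -> R) (o : X) (zeta : R -> X) : Prop :=
  zeta 0 = o /\ forall s t, 0 <= s -> 0 <= t -> d (zeta s) (zeta t) = Rabs (s - t).

Definition quasi_geodesic {X : Type} (d : X -> X -> R) (q Q : R)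
    (g : R -> X) (a b : R) : Prop :=
  forall s t, a <= s <= b -> a <= t <= b ->
    Rabs (s - t) / q - Q <= d (g s) (g t) /\ d (g s) (g t) <= q * Rabs (s - t) + Q.

(** Length of g on [a,b] is at most L: every polygonal sum over a
    nondecreasing chain of parameters in [a,b] is at most L
    (i.e. sup over partitions <= L). *)
Fixpoint chain_sum {X : Type} (d : X -> X -> R) (g : R -> X) (t0 : R) (ts : list R) : R :=
  match ts with
  | nil => 0
  | t1 :: ts' => d (g t0) (g t1) + chain_sum d g t1 ts'
  end.

Fixpoint chain_ok (t0 b : R) (ts : list R) : Prop :=
  match ts with
  | nil => True
  | t1 :: ts' => t0 <= t1 /\ t1 <= b /\ chain_ok t1 b ts'
  end.

Definition length_le {X : Type} (d : X -> X -> R) (g : R -> X) (a b L : R) : Prop :=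
  forall t0 ts, a <= t0 -> chain_ok t0 b ts -> chain_sum d g t0 ts <= L.

Definition concat3 {X : Type} (alpha : R -> X) (a : R) (zeta : R -> X) (tz tp : R)
    (gamma : R -> X) : R -> X :=
  fun t => if Rle_dec t a then alpha t
           else if Rle_dec t (a + (tp - tz)) then zeta (tz + (t - a))
           else gamma (t - (a + (tp - tz))).

(* Main.v *)
Require Import Defs.
From Stdlib Require Import Reals.
From Stdlib Require Import Lra.
Open Scope R_scope.

Lemma qg_low (x q Q D : R) : 0 < q -> x / q - Q <= D -> x <= q * (D + Q).
Proof.
  intros Hq H. assert (Hx : x = q * (x / q)) by (field; lra).
  rewrite Hx at 1. apply Rmult_le_compat_l; lra.
Qed.

Lemma to_div (x M D : R) : 0 < M -> x <= M * (D + M) -> x / M - M <= D.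
Proof.
  intros HM H. assert (x / M <= D + M).
  { apply Rmult_le_reg_l with M; auto.
    replace (M * (x / M)) with x by (field; lra). lra. }
  lra.
Qed.

Lemma c3_1 {X} (alpha : R -> X) a zeta tz tp gamma t :
  t <= a -> concat3 alpha a zeta tz tp gamma t = alpha t.
Proof. intros. unfold concat3. destruct (Rle_dec t a); [reflexivity| lra]. Qed.

Lemma c3_2 {X} (alpha : R -> X) a zeta tz tp gamma t :
  a <= t <= a + (tp - tz) -> zeta tz = alpha a ->
  concat3 alpha a zeta tz tp gamma t = zeta (tz + (t - a)).
Proof.
  intros Ht Hz. unfold concat3. destruct (Rle_dec t a).
  - assert (t = a) by lra. subst t. replace (tz + (a - a)) with tz by ring. auto.
  - destruct (Rle_dec t (a + (tp - tz))); [reflexivity | lra].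
Qed.

Lemma c3_3 {X} (alpha : R -> X) a zeta tz tp gamma t :
  a + (tp - tz) <= t -> tz <= tp -> zeta tz = alpha a -> gamma 0 = zeta tp ->
  concat3 alpha a zeta tz tp gamma t = gamma (t - (a + (tp - tz))).
Proof.
  intros Ht Htp Hz Hg. unfold concat3. destruct (Rle_dec t a).
  - assert (t = a /\ tp = tz) as [-> ->] by lra.
    replace (a - (a + (tz - tz))) with 0 by ring. congruence.
  - destruct (Rle_dec t (a + (tp - tz))).
    + assert (t = a + (tp - tz)) by lra. subst t.
      replace (a + (tp - tz) - (a + (tp - tz))) with 0 by ring.
      replace (tz + (a + (tp - tz) - a)) with tp by ring. congruence.
    + reflexivity.
Qed.

Lemma bndP (c C0 x M : R) : 0 <= c <= M -> 0 <= C0 <= M -> 0 <= x ->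
  c * (x + C0) <= M * (x + M).
Proof. intros. apply Rmult_le_compat; lra. Qed.

Lemma bndM (c x M : R) : c <= M -> 0 <= x -> c * x <= M * x.
Proof. intros. apply Rmult_le_compat_r; lra. Qed.

Theorem mainTheorem3 :
  forall (delta eps C q1 Q1 q2 Q2 : R),
    0 < eps -> eps < delta -> 0 < C ->
    1 <= q1 -> 0 <= Q1 -> 1 <= q2 -> 0 <= Q2 ->
  exists M : R,
  forall (X : Type) (d : X -> X -> R) (o : X),
    is_metric d -> proper_space d -> geodesic_space d ->
  forall (r : R) (alpha : R -> X) (a : R) (zeta : R -> X) (tz : R)
         (gamma : R -> X) (b : R),
    1 < r ->
    (* alpha : [0,a] -> X is a (q1,Q1)-quasi-geodesic segment from o *)
    0 <= a -> quasi_geodesic d q1 Q1 alpha 0 a -> alpha 0 = o ->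
    (forall t, 0 <= t <= a -> d o (alpha t) <= eps * r) ->
    d o (alpha a) = eps * r ->
    (* zeta geodesic ray from o passing through alpha_+ = alpha a *)
    geodesic_ray d o zeta -> 0 <= tz -> zeta tz = alpha a ->
    (* p = zeta (delta r) is the point of zeta on S(o, delta r);
       gamma : [0,b] -> X a (q2,Q2)-quasi-geodesic from p *)
    0 <= b -> quasi_geodesic d q2 Q2 gamma 0 b -> gamma 0 = zeta (delta * r) ->
    (forall t, 0 <= t <= b -> delta * r <= d o (gamma t)) ->
    length_le d gamma 0 b (C * r) ->
    quasi_geodesic d M M (concat3 alpha a zeta tz (delta * r) gamma)
      0 (a + (delta * r - tz) + b).
Proof.
  intros delta eps C q1 Q1 q2 Q2 He Hed HC Hq1 HQ1 Hq2 HQ2.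
  set (K := q1 * (eps + Q1) + (delta - eps) + q2 * (C + Q2)).
  exists (2*q1 + 2*q2 + Q1 + Q2 + 1 + K / (delta - eps)).
  set (M := 2*q1 + 2*q2 + Q1 + Q2 + 1 + K / (delta - eps)).
  intros X d o [Hd0 [Hsym Htri]] _ _ r alpha a zeta tz gamma b Hr Ha HqA Ha0
    HαB HαE [Hz0 Hz] Htz HzA Hb HqG Hg0 HγB Hlen.
  assert (HK : 0 <= K).
  { unfold K. assert (0 <= q1 * (eps + Q1)) by (apply Rmult_le_pos; lra).
    assert (0 <= q2 * (C + Q2)) by (apply Rmult_le_pos; lra). lra. }
  assert (HKd : 0 <= K / (delta - eps)).
  { apply Rmult_le_pos; auto. left; apply Rinv_0_lt_compat; lra. }
  assert (HMK : M * (delta - eps) >= K).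
  { assert (K / (delta - eps) * (delta - eps) = K) by (field; lra).
    assert (M * (delta - eps) >= K / (delta - eps) * (delta - eps)).
    { apply Rle_ge, Rmult_le_compat_r; unfold M; lra. } lra. }
  assert (HM1 : M >= 2*q1 + 2*q2 + Q1 + Q2 + 1) by (unfold M; lra).
  assert (HKdef : K = q1 * (eps + Q1) + (delta - eps) + q2 * (C + Q2)) by reflexivity.
  clearbody M K.
  assert (Hdpos : forall x y, 0 <= d x y).
  { intros x y. pose proof (Htri x y x). rewrite (Hsym y x) in H.
    assert (d x x = 0) by (apply Hd0; reflexivity). lra. }
  assert (Hdo : forall u, 0 <= u -> d o (zeta u) = u).
  { intros u Hu. rewrite <- Hz0, Hz by lra. rewrite Rabs_left1 by lra. ring. }
  assert (Hzd : forall u v, 0 <= u -> u <= v -> d (zeta u) (zeta v) = v - u).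
  { intros u v Hu Huv. rewrite Hz by lra. rewrite Rabs_left1 by lra. ring. }
  assert (HtzE : tz = eps * r).
  { rewrite <- HαE, <- HzA. symmetry; apply Hdo; auto. }
  subst tz.
  set (E := eps * r) in *. set (D := delta * r) in *.
  assert (HEpos : 0 < E) by (unfold E; nra).
  assert (HED : E < D) by (unfold E, D; nra).
  assert (HaB : a <= q1 * (E + Q1)).
  { destruct (HqA 0 a) as [H1 _]; try lra.
    rewrite Ha0, HαE in H1. rewrite Rabs_left1 in H1 by lra.
    apply qg_low in H1; lra. }
  assert (HbB : b <= q2 * (C * r + Q2)).
  { destruct (HqG 0 b) as [H1 _]; try lra.
    assert (d (gamma 0) (gamma b) <= C * r).
    { pose proof (Hlen 0 (cons b nil)). simpl in H. lra. }
    rewrite Rabs_left1 in H1 by lra. apply qg_low in H1; try lra.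
    assert (q2 * (d (gamma 0) (gamma b) + Q2) <= q2 * (C * r + Q2))
      by (apply Rmult_le_compat_l; lra). lra. }
  assert (HA : forall s t, 0 <= s -> s <= t -> t <= a ->
     t - s <= q1 * (d (alpha s) (alpha t) + Q1) /\
     d (alpha s) (alpha t) <= q1 * (t - s) + Q1).
  { intros s t H1 H2 H3. destruct (HqA s t) as [L U]; try lra.
    rewrite Rabs_left1 in L, U by lra. split.
    - apply qg_low in L; lra.
    - lra. }
  assert (HG : forall s t, 0 <= s -> s <= t -> t <= b ->
     t - s <= q2 * (d (gamma s) (gamma t) + Q2) /\
     d (gamma s) (gamma t) <= q2 * (t - s) + Q2).
  { intros s t H1 H2 H3. destruct (HqG s t) as [L U]; try lra.
    rewrite Rabs_left1 in L, U by lra. split.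
    - apply qg_low in L; lra.
    - lra. }
  set (m := a + (D - E)).
  set (sg := concat3 alpha a zeta E D gamma).
  assert (Hmain : forall s t, 0 <= s -> s <= t -> t <= m + b ->
    t - s <= M * (d (sg s) (sg t) + M) /\ d (sg s) (sg t) <= M * (t - s) + M).
  { intros s t Hs Hst Htm.
    assert (S1 : forall x, x <= a -> sg x = alpha x) by (intros; apply c3_1; lra).
    assert (S2 : forall x, a <= x <= m -> sg x = zeta (E + (x - a)))
      by (intros; apply c3_2; auto; unfold m in *; lra).
    assert (S3 : forall x, m <= x -> sg x = gamma (x - m))
      by (intros; unfold m; apply c3_3; auto; unfold m in *; lra).
    assert (Hm : a + (D - E) = m) by reflexivity.
    clearbody m sg.
    destruct (Rle_dec t a) as [Hta|Hta].
    {
      rewrite (S1 s) by lra. rewrite (S1 t) by lra.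
      destruct (HA s t) as [L U]; try lra.
      pose proof (Hdpos (alpha s) (alpha t)).
      pose proof (bndP q1 Q1 (d (alpha s) (alpha t)) M ltac:(lra) ltac:(lra) H).
      pose proof (bndM q1 (t - s) M ltac:(lra) ltac:(lra)).
      split; lra. }
    destruct (Rle_dec s a) as [Hsa|Hsa].
    { destruct (Rle_dec t m) as [Htm'|Htm'].
      {
        rewrite (S1 s) by lra. rewrite (S2 t) by lra.
        set (u := E + (t - a)).
        set (dd := d (alpha s) (zeta u)).
        set (dA := d (alpha s) (alpha a)).
        assert (Hu : d o (zeta u) = u) by (apply Hdo; unfold u; lra).
        assert (H1 : u <= E + dd).
        { pose proof (Htri o (alpha s) (zeta u)). pose proof (HαB s ltac:(lra)). fold dd in H. lra. }
        assert (Hzu : d (zeta E) (zeta u) = t - a) by (rewrite Hzd; unfold u; lra).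
        assert (Hzu' : d (zeta u) (alpha a) = t - a) by (rewrite <- HzA, Hsym; exact Hzu).
        assert (Hzu'' : d (alpha a) (zeta u) = t - a) by (rewrite Hsym; exact Hzu').
        assert (H2 : dA <= dd + (t - a)).
        { pose proof (Htri (alpha s) (zeta u) (alpha a)). fold dd dA in H. lra. }
        assert (H3 : dd <= dA + (t - a)).
        { pose proof (Htri (alpha s) (alpha a) (zeta u)). fold dd dA in H. lra. }
        assert (Htad : t - a <= dd) by (unfold u in H1; lra).
        destruct (HA s a) as [L U]; [lra|lra|lra|]. fold dA in L, U.
        pose proof (Hdpos (alpha s) (zeta u)). fold dd in H.
        pose proof (Hdpos (alpha s) (alpha a)). fold dA in H0.
        assert (q1 * dA <= q1 * (2 * dd)) by (apply Rmult_le_compat_l; lra).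
        pose proof (bndM (2 * q1 + 1) dd M ltac:(lra) H).
        assert (q1 * Q1 <= M * M) by (apply Rmult_le_compat; lra).
        pose proof (bndM q1 (a - s) M ltac:(lra) ltac:(lra)).
        pose proof (bndM 1 (t - a) M ltac:(lra) ltac:(lra)).
        split; lra. }
      {
        rewrite (S1 s) by lra. rewrite (S3 t) by lra.
        set (tt := t - m).
        set (dd := d (alpha s) (gamma tt)).
        assert (H1 : D - E <= dd).
        { pose proof (Htri o (alpha s) (gamma tt)). pose proof (HαB s ltac:(lra)).
          pose proof (HγB tt ltac:(unfold tt; lra)). fold dd in H. lra. }
        split.
        - assert (Hr1 : 0 <= r - 1) by lra.
          assert (0 <= q1 * Q1 * (r - 1)) by (apply Rmult_le_pos; [apply Rmult_le_pos|]; lra).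
          assert (0 <= q2 * Q2 * (r - 1)) by (apply Rmult_le_pos; [apply Rmult_le_pos|]; lra).
          assert (HT : t - s <= K * r).
          { rewrite HKdef. unfold E, D in *. nra. }
          assert (K * r <= M * (delta - eps) * r) by (apply Rmult_le_compat_r; lra).
          assert (M * (delta - eps) * r = M * (D - E)) by (unfold D, E; ring).
          assert (M * (D - E) <= M * dd) by (apply Rmult_le_compat_l; lra).
          assert (0 <= M * M) by (apply Rmult_le_pos; lra). lra.
        - assert (dd <= d (alpha s) (alpha a) + d (alpha a) (gamma tt)) by apply Htri.
          assert (d (alpha a) (gamma tt) <= d (zeta E) (zeta D) + d (gamma 0) (gamma tt)).
          { rewrite <- HzA, Hg0. apply Htri. }
          rewrite Hzd in H0 by lra.
          destruct (HA s a) as [_ U]; try lra.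
          destruct (HG 0 tt) as [_ U2]; try (unfold tt; lra).
          pose proof (bndM q1 (a - s) M ltac:(lra) ltac:(lra)).
          pose proof (bndM q2 (tt - 0) M ltac:(lra) ltac:(unfold tt; lra)).
          pose proof (bndM 1 (D - E) M ltac:(lra) ltac:(lra)).
          assert (t - s = (a - s) + (D - E) + (tt - 0)) by (unfold tt; lra).
          assert (M * (t - s) = M * (a - s) + M * (D - E) + M * (tt - 0)) by (rewrite H5; ring).
          lra. } }
    destruct (Rle_dec t m) as [Htm'|Htm'].
    {
      rewrite (S2 s) by lra. rewrite (S2 t) by lra.
      rewrite Hzd by lra.
      pose proof (bndM 1 (t - s) M ltac:(lra) ltac:(lra)).
      assert (0 <= M * M) by (apply Rmult_le_pos; lra). lra. }
    destruct (Rle_dec s m) as [Hsm|Hsm].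
    {
      rewrite (S2 s) by lra. rewrite (S3 t) by lra.
      set (u := E + (s - a)). set (tt := t - m).
      set (dd := d (zeta u) (gamma tt)).
      set (dG := d (gamma 0) (gamma tt)).
      assert (Hu : d o (zeta u) = u) by (apply Hdo; unfold u; lra).
      assert (HuD : u <= D) by (unfold u; lra).
      assert (H1 : D - u <= dd).
      { pose proof (Htri o (zeta u) (gamma tt)). pose proof (HγB tt ltac:(unfold tt; lra)). fold dd in H. lra. }
      assert (Hzu : d (zeta u) (zeta D) = D - u) by (rewrite Hzd; unfold u; lra).
      assert (H2 : dG <= (D - u) + dd).
      { pose proof (Htri (gamma 0) (zeta u) (gamma tt)). rewrite Hg0, (Hsym (zeta D) (zeta u)) in H.
        fold dd in H. unfold dG. rewrite Hg0. lra. }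
      assert (H3 : dd <= (D - u) + dG).
      { pose proof (Htri (zeta u) (gamma 0) (gamma tt)). rewrite Hg0 in H. fold dd in H.
        unfold dG. rewrite Hg0. lra. }
      destruct (HG 0 tt) as [L U]; [lra|unfold tt; lra|unfold tt; lra|]. fold dG in L, U.
      pose proof (Hdpos (zeta u) (gamma tt)). fold dd in H.
      pose proof (Hdpos (gamma 0) (gamma tt)). fold dG in H0.
      assert (q2 * dG <= q2 * (2 * dd)) by (apply Rmult_le_compat_l; lra).
      pose proof (bndM (2 * q2 + 1) dd M ltac:(lra) H).
      assert (q2 * Q2 <= M * M) by (apply Rmult_le_compat; lra).
      pose proof (bndM q2 (tt - 0) M ltac:(lra) ltac:(unfold tt; lra)).
      pose proof (bndM 1 (m - s) M ltac:(lra) ltac:(lra)).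
      assert (D - u = m - s) by (unfold u; lra).
      assert (Hts : t - s = (m - s) + (tt - 0)) by (unfold tt; lra).
      assert (M * (t - s) = M * (m - s) + M * (tt - 0)) by (rewrite Hts; ring). split; lra. }
    {
      rewrite (S3 s) by lra. rewrite (S3 t) by lra.
      destruct (HG (s - m) (t - m)) as [L U]; try lra.
      pose proof (Hdpos (gamma (s - m)) (gamma (t - m))).
      pose proof (bndP q2 Q2 (d (gamma (s - m)) (gamma (t - m))) M ltac:(lra) ltac:(lra) H).
      pose proof (bndM q2 (t - s) M ltac:(lra) ltac:(lra)).
      replace (t - m - (s - m)) with (t - s) in L, U by ring.
      split; lra. } }
  intros s t Hs Ht.
  assert (HMpos : 0 < M) by lra.
  destruct (Rle_dec s t) as [Hst|Hst].
  - destruct (Hmain s t) as [L U]; [lra | lra | lra |].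
    rewrite Rabs_left1 by lra. split.
    + apply to_div; [exact HMpos | lra].
    + lra.
  - destruct (Hmain t s) as [L U]; [lra | lra | lra |].
    rewrite (Hsym (sg s)). rewrite Rabs_pos_eq by lra. split.
    + apply to_div; [exact HMpos | lra].
    + lra.
Qed.
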